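(* Let $G$ be a connected graph with $|V(G)|\ge 3$ and $L(G)=2l(G)$, and let $F_L,F_l$ be maximum matchings of $G$ with $\nu(G\setminus F_L)=L(G)$ and $\nu(G\setminus F_l)=l(G)$. Then: (a) if $u\in V(F_l)\setminus V(F_L)$, then $\deg(u)\in\{1,2\}$; moreover, if $\deg(u)=2$, and $v,w$ are the two neighbours of $u$ with $(u,w)\in F_l$, then $\deg(w)=2$ and $(v,w)\in F_L$; (b) if $u\in V(F_L)\setminus V(F_l)$, then $\deg(u)\ge 2$.
   Context: Graphs are finite, undirected, without loops or multiple edges. $\nu(G)$ denotes the maximum size of a matching of $G$; a matching is maximum if it has $\nu(G)$ edges. For $F\subseteq E(G)$, $G\setminus F$ is the graph with vertex set $V(G)$ and edge set $E(G)\setminus F$, and $V(F)$ is the set of vertices incident to some edge of $F$. Define $L(G)=\max\{\nu(G\setminus F): F \text{ a maximum matching of } G\}$ and $l(G)=\min\{\nu(G\setminus F): F \text{ a maximum matching of } G\}$. *)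

(* Defs.v *)
(* A simple graph on a finite vertex type T is given by its
   edge set E : {set {set T}}, every edge being a 2-element vertex set. *)
From mathcomp Require Import all_boot.
Set Implicit Arguments. Unset Strict Implicit. Unset Printing Implicit Defensive.

Section Graphs.
Variable T : finType.

Definition is_simple_graph (E : {set {set T}}) : Prop :=
  forall f, f \in E -> #|f| = 2.

Definition adj (E : {set {set T}}) : rel T := fun x y => [set x; y] \in E.

Definition connected_graph (E : {set {set T}}) : Prop :=
  forall x y : T, connect (adj E) x y.

Definition deg (E : {set {set T}}) (u : T) : nat := #|[set v | [set u; v] \in E]|.

Definition Vof (F : {set {set T}}) : {set T} := \bigcup_(f in F) f.

Definition matching_in (E M : {set {set T}}) : bool :=
  (M \subset E) &&
  [forall f in M, forall g in M, (f != g) ==> [disjoint f & g]].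

Definition nu (E : {set {set T}}) : nat :=
  \max_(M : {set {set T}} | matching_in E M) #|M|.

Definition max_matching (E M : {set {set T}}) : bool :=
  matching_in E M && (#|M| == nu E).

Definition Lnu (E : {set {set T}}) : nat :=
  \max_(M : {set {set T}} | max_matching E M) nu (E :\: M).

(* l(G) = min over maximum matchings F of nu(G \ F); the default value #|T|
   is irrelevant since a maximum matching always exists and nu <= #|T|. *)
Definition lnu (E : {set {set T}}) : nat :=
  \big[minn/#|T|]_(M : {set {set T}} | max_matching E M) nu (E :\: M).

End Graphs.

(* Main.v *)
Require Import Defs.
From mathcomp Require Import all_boot.
From Stdlib Require Import Lia.
Set Implicit Arguments. Unset Strict Implicit. Unset Printing Implicit Defensive.

Lemma mat_sub (T : finType) (E M : {set {set T}}) : matching_in E M -> M \subset E.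
Proof. by case/andP. Qed.

Lemma mat_share (T : finType) (E M : {set {set T}}) f g x :
  matching_in E M -> f \in M -> g \in M -> x \in f -> x \in g -> f = g.
Proof.
case/andP=> _ /forallP H hf hg xf xg.
apply/eqP/negPn/negP => ne.
have := implyP (forallP (implyP (H f) hf) g) hg.
move=> /implyP /(_ ne) D.
by rewrite (disjointFr D xf) in xg.
Qed.

Lemma mat_intro (T : finType) (E M : {set {set T}}) :
  M \subset E -> (forall f g x, f \in M -> g \in M -> x \in f -> x \in g -> f = g) ->
  matching_in E M.
Proof.
move=> sME H; apply/andP; split=> //.
apply/forallP=> f; apply/implyP=> hf; apply/forallP=> g; apply/implyP=> hg.
apply/implyP=> ne; rewrite disjoint_subset; apply/subsetP=> x xf.
rewrite !inE; apply/negP=> xg. by rewrite (H f g x hf hg xf xg) eqxx in ne.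
Qed.

Lemma mat_restrict (T : finType) (E E' M M' : {set {set T}}) :
  matching_in E M -> M' \subset M -> M' \subset E' -> matching_in E' M'.
Proof.
move=> hM s1 s2; apply: mat_intro => // f g x hf hg xf xg.
exact: (mat_share hM (subsetP s1 _ hf) (subsetP s1 _ hg) xf xg).
Qed.

Lemma mat_add (T : finType) (E S : {set {set T}}) e :
  matching_in E S -> e \in E ->
  (forall g y, g \in S -> y \in e -> y \in g -> False) ->
  matching_in E (e |: S).
Proof.
move=> hS he H; apply: mat_intro.
  apply/subsetP=> f; case/setU1P=> [->|fS] //; exact: (subsetP (mat_sub hS)).
move=> f g y; case/setU1P=> [->|fS]; case/setU1P=> [->|gS] // yf yg.
- by case: (H g y gS yf yg).
- by case: (H f y fS yg yf).
- exact: (mat_share hS fS gS yf yg).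
Qed.

Lemma nu_ge (T : finType) (E M : {set {set T}}) : matching_in E M -> #|M| <= nu E.
Proof. move=> h; rewrite /nu; exact: (@leq_bigmax_cond _ (fun M : {set {set T}} => matching_in E M) (fun M : {set {set T}} => #|M|) M h). Qed.

Lemma nu_att (T : finType) (E : {set {set T}}) :
  exists2 M, matching_in E M & #|M| = nu E.
Proof.
have h0 : matching_in E set0.
  apply: mat_intro; first exact: sub0set.
  by move=> f g x; rewrite inE.
have hc : 0 < #|(fun M : {set {set T}} => matching_in E M)|.
  apply/card_gt0P; exists set0; exact: h0.
have [M hM e] := eq_bigmax_cond (fun M : {set {set T}} => #|M|) hc.
by exists M.
Qed.

Lemma inVof (T : finType) (F : {set {set T}}) f x : f \in F -> x \in f -> x \in Vof F.
Proof. move=> hf xf; apply/bigcupP; by exists f. Qed.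

Lemma VofP (T : finType) (F : {set {set T}}) x :
  x \in Vof F -> exists2 f, f \in F & x \in f.
Proof. by move/bigcupP. Qed.

Lemma edge_form (T : finType) (E : {set {set T}}) f u :
  is_simple_graph E -> f \in E -> u \in f -> exists v, f = [set u; v].
Proof.
move=> hE fE uf. have /eqP/cards2P [x [y [nxy ef]]] := hE f fE.
move: uf; rewrite ef in_set2 => /orP [/eqP->|/eqP->]; first by exists y.
by exists x; rewrite setUC.
Qed.

Lemma edge_neq (T : finType) (E : {set {set T}}) u v :
  is_simple_graph E -> [set u; v] \in E -> u != v.
Proof. move=> hE h; have := hE _ h; rewrite cards2; by case: (u != v). Qed.

Lemma eq2 (T : finType) (u v w : T) : [set u; v] = [set u; w] -> u != v -> v = w.
Proof.
move=> e nuv; have: v \in [set u; w] by rewrite -e !inE eqxx orbT.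
rewrite in_set2 => /orP[/eqP h|/eqP //]. by rewrite h eqxx in nuv.
Qed.

Lemma in2 (T : finType) (u v y : T) : y \in [set u; v] -> y = u \/ y = v.
Proof. by rewrite in_set2 => /orP[/eqP|/eqP]; [left|right]. Qed.

Lemma add_edge (T : finType) (E X : {set {set T}}) a b :
  matching_in E X -> #|X| = nu E -> [set a; b] \in E ->
  a \notin Vof X -> b \notin Vof X -> False.
Proof.
move=> hX hXn hab ha hb.
have hm : matching_in E ([set a; b] |: X).
  apply: mat_add => // g y gX /in2 [->|->] yg.
  - by move/negP: ha; apply; apply: (inVof gX).
  - by move/negP: hb; apply; apply: (inVof gX).
have nin : [set a; b] \notin X.
  apply/negP=> h; move/negP: ha; apply; apply: (inVof h); by rewrite !inE eqxx.
have := nu_ge hm; rewrite cardsU1 nin hXn add1n ltnn //.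
Qed.

Lemma E1 (T : finType) (E B X M : {set {set T}})
  (hB : matching_in E B) (hBn : #|B| = nu E)
  (hX : matching_in E X) (hXn : #|X| = nu E)
  (hM : matching_in (E :\: X) M) (hMn : 2 * nu (E :\: B) <= #|M|) :
  (B :\: X \subset M) /\ nu (E :\: B) <= #|M :\: B|.
Proof.
have sME : M \subset E.
  apply/subsetP=> f /(subsetP (mat_sub hM)); by rewrite inE => /andP[].
have h1 : #|M :\: B| <= nu (E :\: B).
  apply: nu_ge; apply: (mat_restrict hM); first exact: subsetDl.
  apply/subsetP=> f; rewrite !inE => /andP[-> fM]; by rewrite (subsetP sME _ fM).
have h2 : #|X :\: B| <= nu (E :\: B).
  apply: nu_ge; apply: (mat_restrict hX); first exact: subsetDl.
  apply/subsetP=> f; rewrite !inE => /andP[-> fX]; by rewrite (subsetP (mat_sub hX) _ fX).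
have h3 : #|B :\: X| = #|X :\: B|.
  have := cardsID X B; have := cardsID B X; rewrite setIC hBn hXn.
  rewrite -?plusE; lia.
have h4 : M :&: B \subset B :\: X.
  apply/subsetP=> f; rewrite !inE => /andP[fM ->].
  by move: (subsetP (mat_sub hM) _ fM); rewrite inE => /andP[-> _].
have h5 := cardsID B M.
have h6 : #|B :\: X| <= #|M :&: B|.
  move: hMn h1 h2 h5; rewrite h3 => /leP a /leP b /leP c d; apply/leP.
  rewrite -?plusE -?multE in a d *; lia.
have h7 : M :&: B = B :\: X by apply/eqP; rewrite eqEcard h4 h6.
split; first by rewrite -h7 subsetIl.
have h8 := subset_leq_card h4.
move: hMn h2 h5 h8; rewrite h3 => /leP a /leP b c /leP d; apply/leP.
rewrite -?plusE -?multE in a c *; lia.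
Qed.

Lemma R_aug (T : finType) (E B M : {set {set T}}) e
  (hM : matching_in E M) (hl : nu (E :\: B) <= #|M :\: B|)
  (he : e \in E) (heB : e \notin B) (heM : e \notin M)
  (H : forall f y, f \in M -> f \notin B -> y \in e -> y \in f -> False) : False.
Proof.
have hK : matching_in (E :\: B) (e |: (M :\: B)).
  apply: mat_add; last first.
  - move=> g y; rewrite inE => /andP[gB gM]; exact: H.
  - by rewrite inE heB.
  apply: (mat_restrict hM); first exact: subsetDl.
  apply/subsetP=> f; rewrite !inE => /andP[-> fM]; by rewrite (subsetP (mat_sub hM) _ fM).
have := nu_ge hK; rewrite cardsU1 inE (negbTE heM) andbF /= add1n => h.
have := leq_trans h hl; by rewrite ltnn.
Qed.

Lemma swap_mat (T : finType) (E X : {set {set T}}) u v ev :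
  matching_in E X -> #|X| = nu E -> u \notin Vof X -> [set u; v] \in E ->
  ev \in X -> v \in ev ->
  matching_in E ([set u; v] |: (X :\ ev)) /\ #|[set u; v] |: (X :\ ev)| = nu E.
Proof.
move=> hX hXn hu huv evX vev.
split.
  apply: mat_add => //.
    apply: (mat_restrict hX); first exact: subsetDl.
    apply: subset_trans (mat_sub hX); exact: subsetDl.
  move=> g y; rewrite in_setD1 => /andP[gne gX] /in2 [->|->] yg.
  - by move/negP: hu; apply; apply: (inVof gX).
  - by move/negP: gne; apply; apply/eqP; apply: (mat_share hX gX evX yg vev).
have nin : [set u; v] \notin X.
  apply/negP=> h; move/negP: hu; apply; apply: (inVof h); by rewrite !inE eqxx.
rewrite cardsU1 in_setD1 (negbTE nin) andbF -hXn (cardsD1 ev X) evX //.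
Qed.

Lemma genA (T : finType) (E B X M : {set {set T}}) (hE : is_simple_graph E)
  (hB : matching_in E B) (hBn : #|B| = nu E)
  (hX : matching_in E X) (hXn : #|X| = nu E)
  (hM : matching_in (E :\: X) M) (hMn : 2 * nu (E :\: B) <= #|M|)
  u w v (hu : u \notin Vof X) (huw : [set u; w] \in B) (hvw : v != w)
  (huv : [set u; v] \in E) : [set v; w] \in X.
Proof.
have sBE := mat_sub hB. have sXE := mat_sub hX.
have sME : M \subset E.
  apply/subsetP=> f /(subsetP (mat_sub hM)); by rewrite inE => /andP[].
have hME : matching_in E M by apply: (mat_restrict hM).
have MX : forall f, f \in M -> f \notin X.
  by move=> f /(subsetP (mat_sub hM)); rewrite inE => /andP[].
have XM : forall f, f \in X -> f \notin M.
  by move=> f fX; apply/negP=> fM; move: (MX _ fM); rewrite fX.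
have uwE : [set u; w] \in E := subsetP sBE _ huw.
have nuw : u != w := edge_neq hE uwE.
have nuv : u != v := edge_neq hE huv.
have uwX : [set u; w] \notin X.
  apply/negP=> h; move/negP: hu; apply; apply: (inVof h); by rewrite !inE eqxx.
have [E1a E1b] := E1 hB hBn hX hXn hM hMn.
have uwM : [set u; w] \in M by apply: (subsetP E1a); rewrite inE uwX huw.
have uvne : [set u; v] != [set u; w].
  by apply/negP=> /eqP /eq2 /(_ nuv) e; rewrite e eqxx in hvw.
have uvM : [set u; v] \notin M.
  apply/negP=> h; move/negP: uvne; apply; apply/eqP.
  apply: (mat_share (x:=u) hME h uwM); by rewrite !inE ?eqxx.
have uvB : [set u; v] \notin B.
  apply/negP=> h; move/negP: uvne; apply; apply/eqP.
  apply: (mat_share (x:=u) hB h huw); by rewrite !inE ?eqxx.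
have vX : v \in Vof X.
  by case: (boolP (v \in Vof X)) => // nv; case: (add_edge hX hXn huv hu nv).
have wX : w \in Vof X.
  by case: (boolP (w \in Vof X)) => // nw; case: (add_edge hX hXn uwE hu nw).
have [ev evX vev] := VofP vX.
have [ew ewX wew] := VofP wX.
case: (eqVneq ev ew) => [eve|evne].
  have [x ex] := edge_form hE (subsetP sXE _ evX) vev.
  have : w \in [set v; x] by rewrite -ex eve.
  case/in2 => [wv|->]; first by rewrite wv eqxx in hvw.
  by rewrite -ex.
have [z ewz] := edge_form hE (subsetP sXE _ ewX) wew.
have [hX3 hX3n] := swap_mat hX hXn hu huv evX vev.
set X3 := [set u; v] |: (X :\ ev) in hX3 hX3n.
have hM3 : matching_in (E :\: X3) M.
  apply: (mat_restrict hME) => //.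
  apply/subsetP=> f fM; rewrite inE (subsetP sME _ fM) andbT.
  rewrite /X3 !inE negb_or negb_and (MX _ fM) orbT andbT.
  by apply/negP=> /eqP e; rewrite -e fM in uvM.
have [E3a _] := E1 hB hBn hX3 hX3n hM3 hMn.
have uvX3 : [set u; v] \in X3 by rewrite /X3 setU11.
have ewX3 : ew \in X3 by rewrite /X3; apply: setU1r; rewrite in_setD1 ewX andbT eq_sym.
have uew : u \notin ew by apply/negP=> h; move/negP: hu; apply; apply: (inVof ewX).
have ewB : ew \notin B.
  apply/negP=> h.
  have e : ew = [set u; w] by apply: (mat_share hB h huw wew); rewrite !inE eqxx orbT.
  by rewrite -e ewX in uwX.
have vB : v \notin Vof B.
  apply/negP=> /VofP [g gB vg].
  have gX3 : g \notin X3.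
    apply/negP=> h.
    have e : g = [set u; v] by apply: (mat_share hX3 h uvX3 vg); rewrite !inE eqxx orbT.
    by rewrite -e gB in uvB.
  have gM : g \in M by apply: (subsetP E3a); rewrite inE gX3 gB.
  apply: (R_aug hME E1b huv uvB uvM) => f y fM fB /in2 [->|->] yf.
  - have e : f = [set u; w] by apply: (mat_share hME fM uwM yf); rewrite !inE eqxx.
    by rewrite e huw in fB.
  - have e : f = g := mat_share hME fM gM yf vg.
    by rewrite e gB in fB.
have zB : z \notin Vof B.
  apply/negP=> /VofP [g gB zg].
  have zew : z \in ew by rewrite ewz !inE eqxx orbT.
  have gX3 : g \notin X3.
    apply/negP=> h.
    have e : g = ew := mat_share hX3 h ewX3 zg zew.
    by rewrite -e gB in ewB.
  have gM : g \in M by apply: (subsetP E3a); rewrite inE gX3 gB.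
  apply: (R_aug hME E1b (subsetP sXE _ ewX) ewB (XM _ ewX)) => f y fM fB.
  rewrite ewz => /in2 [->|->] yf.
  - have e : f = [set u; w] by apply: (mat_share hME fM uwM yf); rewrite !inE eqxx orbT.
    by rewrite e huw in fB.
  - have e : f = g := mat_share hME fM gM yf zg.
    by rewrite e gB in fB.
have hB1 : matching_in E (ew |: (B :\ [set u; w])).
  apply: mat_add; last first.
  - move=> g y; rewrite in_setD1 => /andP[gne gB]; rewrite ewz => /in2 [->|->] yg.
    + move/negP: gne; apply; apply/eqP; apply: (mat_share hB gB huw yg).
      by rewrite !inE eqxx orbT.
    + by move/negP: zB; apply; apply: (inVof gB).
  - exact: (subsetP sXE).
  apply: (mat_restrict hB); first exact: subsetDl.
  apply: subset_trans sBE; exact: subsetDl.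
have hB2 : matching_in E ([set u; v] |: (ew |: (B :\ [set u; w]))).
  apply: mat_add => // g y; case/setU1P=> [->|]; last rewrite in_setD1 => /andP[gne gB].
    move=> /in2 [->|->] yg; first by rewrite yg in uew.
    by have := mat_share hX ewX evX yg vev; move=> e; rewrite e eqxx in evne.
  move=> /in2 [->|->] yg.
    move/negP: gne; apply; apply/eqP; apply: (mat_share hB gB huw yg).
    by rewrite !inE eqxx.
  by move/negP: vB; apply; apply: (inVof gB).
have := nu_ge hB2.
have n1 : [set u; v] \notin ew |: (B :\ [set u; w]).
  rewrite !inE negb_or negb_and uvB orbT andbT.
  apply/negP=> /eqP e; move/negP: uew; apply; by rewrite -e !inE eqxx.
have n2 : ew \notin B :\ [set u; w] by rewrite in_setD1 negb_and ewB orbT.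
rewrite cardsU1 n1 cardsU1 n2 -hBn (cardsD1 [set u; w] B) huw.
by rewrite !add1n ltnn.
Qed.

Theorem claim3 (T : finType) (E : {set {set T}})
  (hE : is_simple_graph E) (hconn : connected_graph E) (h3 : 3 <= #|T|)
  (hLl : Lnu E = 2 * lnu E)
  (FL Fl : {set {set T}})
  (hFL : max_matching E FL) (hFl : max_matching E Fl)
  (hFLnu : nu (E :\: FL) = Lnu E) (hFlnu : nu (E :\: Fl) = lnu E) :
  (forall u : T, u \in Vof Fl -> u \notin Vof FL ->
     (deg E u = 1 \/ deg E u = 2) /\
     (deg E u = 2 -> forall v w : T, v != w ->
        [set u; v] \in E -> [set u; w] \in E -> [set u; w] \in Fl ->
        deg E w = 2 /\ [set v; w] \in FL)) /\
  (forall u : T, u \in Vof FL -> u \notin Vof Fl -> 2 <= deg E u).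
Proof.
have [M hM hMc] := nu_att (E :\: FL).
have hMn : 2 * nu (E :\: Fl) <= #|M| by rewrite hMc hFLnu hLl hFlnu.
case/andP: hFL => hA /eqP hAn. case/andP: hFl => hB /eqP hBn.
have sAE := mat_sub hA. have sBE := mat_sub hB.
have sME : M \subset E.
  apply/subsetP=> f /(subsetP (mat_sub hM)); by rewrite inE => /andP[].
have hME : matching_in E M by apply: (mat_restrict hM).
have MA : forall f, f \in M -> f \notin FL.
  by move=> f /(subsetP (mat_sub hM)); rewrite inE => /andP[].
have [E1a E1b] := E1 hB hBn hA hAn hM hMn.
split.
- move=> u uB uA.
  have [g gB ug] := VofP uB.
  have [w gw] := edge_form hE (subsetP sBE _ gB) ug.
  rewrite gw in gB.
  have nbr : forall v, v != w -> [set u; v] \in E -> [set v; w] \in FL.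
    move=> v vw uv; exact: (genA hE hB hBn hA hAn hM hMn uA gB vw uv).
  split.
  + rewrite /deg.
    case: (boolP [exists v, ([set u; v] \in E) && (v != w)]).
    * case/existsP=> v /andP[uv vw]. right.
      have -> : [set v0 | [set u; v0] \in E] = [set w; v].
        apply/setP=> x; rewrite inE in_set2.
        case: (eqVneq x w) => [->|xw]; first by rewrite /= (subsetP sBE _ gB).
        rewrite /=.
        apply/idP/idP.
        - move=> ux. have h1 := nbr x xw ux. have h2 := nbr v vw uv.
          have e : [set x; w] = [set v; w].
            by apply: (mat_share (x:=w) hA h1 h2); rewrite !inE ?eqxx ?orbT.
          have : x \in [set v; w] by rewrite -e !inE eqxx.
          by case/in2 => [->|xw']; [rewrite eqxx | rewrite xw' eqxx in xw].
        - by move/eqP->.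
      by rewrite cards2 eq_sym vw.
    * move=> hn; left.
      have -> : [set v0 | [set u; v0] \in E] = [set w].
        apply/setP=> x; rewrite !inE.
        apply/idP/idP; last by move/eqP->; exact: (subsetP sBE _ gB).
        move=> ux; apply/negPn/negP => xw; move/negP: hn; apply; apply/existsP.
        by exists x; rewrite ux xw.
      exact: cards1.
  + move=> _ v w' vw' uv uw'E uw'B.
    have vw'A := genA hE hB hBn hA hAn hM hMn uA uw'B vw' uv.
    split=> //.
    have vin : v \in [set v; w'] by rewrite !inE eqxx.
    have [hX4 hX4n] := swap_mat hA hAn uA uv vw'A vin.
    set X4 := [set u; v] |: (FL :\ [set v; w']) in hX4 hX4n.
    have nuv := edge_neq hE uv. have nuw' := edge_neq hE uw'E.
    have uw'M : [set u; w'] \in M.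
      apply: (subsetP E1a); rewrite inE uw'B andbT; apply/negP => h.
      move/negP: uA; apply; apply: (inVof h); by rewrite !inE eqxx.
    have uvM : [set u; v] \notin M.
      apply/negP=> h.
      have e : [set u; v] = [set u; w'].
        by apply: (mat_share (x:=u) hME h uw'M); rewrite !inE ?eqxx.
      by move: (eq2 e nuv) => e'; rewrite e' eqxx in vw'.
    have hM4 : matching_in (E :\: X4) M.
      apply: (mat_restrict hME) => //.
      apply/subsetP=> f fM; rewrite inE (subsetP sME _ fM) andbT.
      rewrite /X4 !inE negb_or negb_and (MA _ fM) orbT andbT.
      by apply/negP=> /eqP e; rewrite -e fM in uvM.
    have w'X4 : w' \notin Vof X4.
      apply/negP => /VofP [f fX4 w'f]; move: fX4; rewrite /X4.
      case/setU1P => [fe|]; last rewrite in_setD1 => /andP[fne fA].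
      - rewrite fe in w'f; case/in2: w'f => e.
        + by rewrite e eqxx in nuw'.
        + by rewrite e eqxx in vw'.
      - have e : f = [set v; w'].
          by apply: (mat_share hA fA vw'A w'f); rewrite !inE eqxx orbT.
        by rewrite e eqxx in fne.
    have Bw'u : [set w'; u] \in Fl by rewrite setUC.
    have nbr2 : forall r, r != u -> [set w'; r] \in E -> [set r; u] \in X4.
      move=> r ru wr; exact: (genA hE hB hBn hX4 hX4n hM4 hMn w'X4 Bw'u ru wr).
    rewrite /deg.
    have -> : [set r | [set w'; r] \in E] = [set u; v].
      apply/setP=> x; rewrite inE in_set2.
      case: (eqVneq x u) => [->|xu].
        by rewrite /= (setUC [set w']) (subsetP sBE _ uw'B).
      rewrite /=.
      apply/idP/idP.
      - move=> wx. have := nbr2 x xu wx. rewrite /X4 => /setU1P [e|]; last first.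
          rewrite in_setD1 => /andP[_ h]; exfalso; move/negP: uA; apply; apply: (inVof h).
          by rewrite !inE eqxx orbT.
        have : x \in [set u; v] by rewrite -e !inE eqxx.
        by case/in2 => [xu'|->]; [rewrite xu' eqxx in xu | rewrite eqxx].
      - move/eqP->. rewrite (setUC [set w']); exact: (subsetP sAE _ vw'A).
    by rewrite cards2 nuv.
- move=> u uA uB.
  have [g gA ug] := VofP uA.
  have [z gz] := edge_form hE (subsetP sAE _ gA) ug.
  rewrite gz in gA.
  have uzE := subsetP sAE _ gA.
  rewrite /deg.
  case: (boolP [exists v, ([set u; v] \in E) && (v != z)]).
    case/existsP => v /andP[uv vz]. apply/card_gt1P; exists z, v.
    by rewrite !inE uzE uv eq_sym vz.
  move=> hn; exfalso.
  have nbr : forall v, [set u; v] \in E -> v = z.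
    move=> v uv; apply/eqP/negPn/negP => vz; move/negP: hn; apply; apply/existsP.
    by exists v; rewrite uv vz.
  have zB : z \in Vof Fl.
    by case: (boolP (z \in Vof Fl)) => // nz; case: (add_edge hB hBn uzE uB nz).
  have [gz' gzB zgz] := VofP zB.
  have zin : z \in [set u; z] by rewrite !inE eqxx orbT.
  have gzA : gz' \notin FL.
    apply/negP => h. have e : gz' = [set u; z] := mat_share hA h gA zgz zin.
    move/negP: uB; apply; apply: (inVof gzB); by rewrite e !inE eqxx.
  have gzM : gz' \in M by apply: (subsetP E1a); rewrite inE gzA gzB.
  have uzB : [set u; z] \notin Fl.
    apply/negP => h; move/negP: uB; apply; apply: (inVof h); by rewrite !inE eqxx.
  have uzM : [set u; z] \notin M by apply/negP=> h; move: (MA _ h); rewrite gA.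
  apply: (R_aug hME E1b uzE uzB uzM) => f y fM fB /in2 [->|->] yf.
  + have fE := subsetP sME _ fM.
    have [v' fv] := edge_form hE fE yf.
    have ev : v' = z by apply: nbr; rewrite -fv.
    by move: (MA _ fM); rewrite fv ev gA.
  + have e : f = gz' := mat_share hME fM gzM yf zgz.
    by rewrite e gzB in fB.
Qed.
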